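(* For no $a_0,a_3\in\mathbb{C}$ is the third-order recursion $$z_n = \frac{a_3 z_{n-3} + z_{n-1} + a_0}{z_{n-3}}$$ periodic with period $8$, and for no $a_0,a_3\in\mathbb{C}$ is it periodic with period $12$.
   Context: Let $z_1,z_2,z_3$ be independent indeterminates over $\mathbb{C}$ and define $z_n\in\mathbb{C}(z_1,z_2,z_3)$ for $n\ge4$ by the recursion. A third-order recursion is periodic with period $k$ if all iterates are well-defined elements of $\mathbb{C}(z_1,z_2,z_3)$ (no denominator identically zero) and $z_{k+1}=z_1$, $z_{k+2}=z_2$, $z_{k+3}=z_3$. *)

(* Defs.v *)
From HB Require Import structures.
From mathcomp Require Import all_boot all_order all_algebra.
From mathcomp Require Import Rstruct.
From mathcomp Require Import complex fraction.
Set Implicit Arguments. Unset Strict Implicit. Unset Printing Implicit Defensive.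
Import Order.TTheory GRing.Theory Num.Theory.
Local Open Scope ring_scope.

Definition C : fieldType := (Rdefinitions.R)[i].

(* polynomial ring C[z1,z2,z3] as {poly {poly {poly C}}} *)
Definition P3 : idomainType := {poly {poly {poly C}}}.
Definition F3 : fieldType := {fraction P3}.

Definition emb (p : P3) : F3 := @FracField.tofrac P3 p.

Definition cst (c : C) : F3 := emb ((c%:P)%:P)%:P.
Definition Z1 : F3 := emb (('X)%:P)%:P.
Definition Z2 : F3 := emb ('X)%:P.
Definition Z3 : F3 := emb 'X.

(* iterates, 0-indexed: zseq n = z_{n+1};  z_n = (a3 z_{n-3} + z_{n-1} + a0)/z_{n-3} *)
Fixpoint zseq3 (a0 a3 : C) (n : nat) : F3 * F3 * F3 :=
  match n with
  | 0%N => (Z1, Z2, Z3)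
  | n'.+1 => let: (x, y, w) := zseq3 a0 a3 n' in
             (y, w, (cst a3 * x + w + cst a0) / x)
  end.
Definition zseq (a0 a3 : C) (n : nat) : F3 := (zseq3 a0 a3 n).1.1.

(* all iterates well defined: every denominator z_{n-3} (n >= 4) is nonzero *)
Definition well_defined (a0 a3 : C) : Prop := forall n, zseq a0 a3 n != 0.

Definition periodic_with (a0 a3 : C) (k : nat) : Prop :=
  well_defined a0 a3 /\
  [/\ zseq a0 a3 k = zseq a0 a3 0, zseq a0 a3 k.+1 = zseq a0 a3 1
    & zseq a0 a3 k.+2 = zseq a0 a3 2].

(* Main.v *)
Require Import Defs.
From HB Require Import structures.
From mathcomp Require Import all_boot all_order all_algebra.
From mathcomp Require Import Rstruct complex fraction.
From mathcomp Require Import ring.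
Import Order.TTheory GRing.Theory Num.Theory.
Local Open Scope ring_scope.
Set Implicit Arguments. Unset Strict Implicit. Unset Printing Implicit Defensive.

Section Gen.
Variable R : comNzRingType.
Definition stepND (b0 b3 : R) (t : (R*R)*(R*R)*(R*R)) :=
  let: (p, q, r) := t in
  (q, r, ((b3 * p.1 + b0 * p.2) * r.2 + r.1 * p.2, p.1 * r.2)).
Fixpoint ND (x1 x2 x3 b0 b3 : R) n :=
  match n with
  | 0 => ((x1, 1), (x2, 1), (x3, 1))
  | n'.+1 => stepND b0 b3 (ND x1 x2 x3 b0 b3 n')
  end.
End Gen.

Definition mapP (R S : Type) (f : R -> S) (p : R * R) := (f p.1, f p.2).
Definition mapT (R S : Type) (f : R -> S) (t : (R*R)*(R*R)*(R*R)) :=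
  (mapP f t.1.1, mapP f t.1.2, mapP f t.2).

Lemma ND_morph (R S : comNzRingType) (f : {rmorphism R -> S}) x1 x2 x3 b0 b3 n :
  mapT f (ND x1 x2 x3 b0 b3 n) = ND (f x1) (f x2) (f x3) (f b0) (f b3) n.
Proof.
elim: n => [|n IH] /=; first by rewrite /mapT /mapP /= rmorph1.
rewrite -IH; clear IH; move: (ND _ _ _ _ _ n) => [[[p1 p2] [q1 q2]] [r1 r2]].
by rewrite /mapT /mapP /= !rmorphD !rmorphM /= rmorphD !rmorphM.
Qed.


Lemma inv_F3 a0 a3 : well_defined a0 a3 -> forall n,
  let: (X, Y, W) := zseq3 a0 a3 n in
  let: (p, q, r) := ND Z1 Z2 Z3 (cst a0) (cst a3) n in
  [/\ p.2 != 0, q.2 != 0, r.2 != 0 & [/\ X * p.2 = p.1, Y * q.2 = q.1 & W * r.2 = r.1]].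
Proof.
move=> wd; elim=> [|n IH].
 cbn [zseq3 ND fst snd].
 split; try exact: oner_neq0; split; exact: mulr1.
move: (wd n) IH. Time rewrite /zseq. Time cbn [zseq3 ND].
case: (zseq3 a0 a3 n) => [[X Y] W]; case: (ND _ _ _ _ _ n) => [[[p1 p2] [q1 q2]] [r1 r2]].
cbn [stepND fst snd] => hX [hp hq hr [eX eY eW]].
split; [exact: hq | exact: hr | | ].
  apply: mulf_neq0; last exact: hr. rewrite -eX. apply: (mulf_neq0 hX). exact: hp.
split; [exact: eY | exact: eW | ].
rewrite -eX -eW. 
rewrite -[X * p2 * r2]mulrA mulrA (divfK hX).
ring.
Qed.

Definition X1 : P3 := ('X%:P)%:P.
Definition X2 : P3 := ('X)%:P.
Definition X3 : P3 := 'X.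
Definition cP (c : C) : P3 := ((c%:P)%:P)%:P.
Definition NDP a0 a3 n := ND X1 X2 X3 (cP a0) (cP a3) n.

Lemma per_P3 a0 a3 k (u : P3) : well_defined a0 a3 -> zseq a0 a3 k = emb u ->
  (NDP a0 a3 k).1.1.1 = u * (NDP a0 a3 k).1.1.2.
Proof.
move=> wd hz.
have M : mapT emb (NDP a0 a3 k) = ND Z1 Z2 Z3 (cst a0) (cst a3) k := ND_morph emb _ _ _ _ _ k.
have := inv_F3 wd k; rewrite -M; move: hz; rewrite /zseq.
case: (zseq3 a0 a3 k) => [[X Y] W]; case: (NDP a0 a3 k) => [[[p1 p2] [q1 q2]] [r1 r2]].
cbn [mapT mapP fst snd] => -> [_ _ _ [e _ _]].
apply/eqP; rewrite -tofrac_eq; apply/eqP.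
rewrite rmorphM. Time exact: (esym e).
Qed.

Section Phi.
Variables u1 u2 u3 : {poly C}.
Definition cm1 : commr_rmorph (@polyC C) u1 := fun x => mulrC _ _.
Definition cm2 : commr_rmorph (horner_morph cm1) u2 := fun x => mulrC _ _.
Definition cm3 : commr_rmorph (horner_morph cm2) u3 := fun x => mulrC _ _.
Definition phi3 : {rmorphism P3 -> {poly C}} := horner_morph cm3.
Lemma phi3X1 : phi3 X1 = u1.
Proof. rewrite /phi3 /X1 /=. etransitivity; first exact: (horner_morphC cm3 _).
etransitivity; first exact: (horner_morphC cm2 _). exact: horner_morphX. Qed.
Lemma phi3X2 : phi3 X2 = u2.
Proof. rewrite /phi3 /X2 /=. etransitivity; first exact: (horner_morphC cm3 _).
exact: horner_morphX. Qed.
Lemma phi3X3 : phi3 X3 = u3.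
Proof. rewrite /phi3 /X3 /=. exact: (horner_morphX cm3). Qed.
Lemma phi3C c : phi3 (cP c) = c%:P.
Proof. rewrite /phi3 /cP /=. etransitivity; first exact: (horner_morphC cm3 _).
etransitivity; first exact: (horner_morphC cm2 _). exact: (horner_morphC cm1 _). Qed.
End Phi.

Definition NDq (u1 u2 u3 : {poly C}) a0 a3 n := ND u1 u2 u3 a0%:P a3%:P n.

Lemma per_poly a0 a3 k (u : P3) u1 u2 u3 : well_defined a0 a3 -> zseq a0 a3 k = emb u ->
  (NDq u1 u2 u3 a0 a3 k).1.1.1 = phi3 u1 u2 u3 u * (NDq u1 u2 u3 a0 a3 k).1.1.2.
Proof.
move=> wd hz; have := per_P3 wd hz.
have M := ND_morph (phi3 u1 u2 u3) X1 X2 X3 (cP a0) (cP a3) k.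
rewrite phi3X1 phi3X2 phi3X3 !phi3C in M.
rewrite /NDq -M /NDP; case: (ND X1 X2 X3 _ _ k) => [[[p1 p2] [q1 q2]] [r1 r2]] /= ->.
by rewrite rmorphM.
Qed.

Definition ev (p : {poly C}) : C := p.[0].
Definition dv (p : {poly C}) : C := (p^`()).[0].
Lemma evD p q : ev (p + q) = ev p + ev q. Proof. by rewrite /ev hornerD. Qed.
Lemma evM p q : ev (p * q) = ev p * ev q. Proof. by rewrite /ev hornerM. Qed.
Lemma evC c : ev c%:P = c. Proof. by rewrite /ev hornerC. Qed.
Lemma dvD p q : dv (p + q) = dv p + dv q. Proof. by rewrite /dv derivD hornerD. Qed.
Lemma dvM p q : dv (p * q) = dv p * ev q + ev p * dv q.
Proof. by rewrite /dv /ev derivM hornerD !hornerM. Qed.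
Lemma dvC c : dv c%:P = 0. Proof. by rewrite /dv derivC horner0. Qed.

Definition st := ((C * C * C) * (C * C * C))%type.
Definition xdstep (a0 a3 : C) (s : st) : st :=
  let: ((x1, x2, x3), (e1, e2, e3)) := s in
  ((x2, x3, a3 + (x3 + a0) / x1), (e2, e3, e3 / x1 - (x3 + a0) * e1 / x1 ^+ 2)).
Fixpoint XD (u1 u2 u3 : {poly C}) a0 a3 n : st :=
  match n with
  | 0 => ((ev u1, ev u2, ev u3), (dv u1, dv u2, dv u3))
  | n'.+1 => xdstep a0 a3 (XD u1 u2 u3 a0 a3 n')
  end.

Definition good (p : {poly C} * {poly C}) (x e : C) :=
  [/\ ev p.2 != 0, ev p.1 = x * ev p.2 & dv p.1 = e * ev p.2 + x * dv p.2].

Lemma dual_inv u1 u2 u3 a0 a3 n :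
  (forall m, (m < n)%N -> (XD u1 u2 u3 a0 a3 m).1.1.1 != 0) ->
  let: (p, q, r) := NDq u1 u2 u3 a0 a3 n in
  let: ((x1, x2, x3), (e1, e2, e3)) := XD u1 u2 u3 a0 a3 n in
  [/\ good p x1 e1, good q x2 e2 & good r x3 e3].
Proof.
elim: n => [|n IH] hnz.
  rewrite /good /=; rewrite !evC !dvC; split; split; rewrite ?oner_neq0 //; ring.
have h0 := hnz n (ltnSn n).
have := IH (fun m hm => hnz m (ltnW hm)); move: h0.
rewrite /NDq /=; case: (ND _ _ _ _ _ n) => [[[p1 p2] [q1 q2]] [r1 r2]].
case: (XD _ _ _ _ _ n) => [[[x1 x2] x3] [[e1 e2] e3]] /= hx1 [hp hq hr].
split=> //.
move: hp hr; rewrite /good; cbn [fst snd] => -[hp2 ep1 dp1] [hr2 er1 dr1].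
rewrite /good /=; split.
- by rewrite evM ep1 !mulf_neq0.
- rewrite !(evD, evM, evC) ep1 er1. field. exact: hx1.
- rewrite !(dvD, dvM, evD, evM, dvC, evC) ep1 er1 dp1 dr1. field. exact: hx1.
Qed.

Lemma per_one a0 a3 n (U : P3) u1 u2 u3 : well_defined a0 a3 -> zseq a0 a3 n = emb U ->
  (forall m, (m < n)%N -> (XD u1 u2 u3 a0 a3 m).1.1.1 != 0) ->
  (XD u1 u2 u3 a0 a3 n).1.1.1 = ev (phi3 u1 u2 u3 U) /\
  (XD u1 u2 u3 a0 a3 n).2.1.1 = dv (phi3 u1 u2 u3 U).
Proof.
move=> wd hz hnz.
have E := per_poly u1 u2 u3 wd hz.
have I := dual_inv hnz.
move: E I; set w := phi3 u1 u2 u3 U.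
case: (NDq _ _ _ _ _ n) => [[[p1 p2] qq] rr].
case: (XD _ _ _ _ _ n) => [[[x1 x2] x3] [[e1 e2] e3]].
rewrite /good; cbn [fst snd] => E [[hp2 ep1 dp1] _ _].
rewrite E evM in ep1; have ex : x1 = ev w by apply: (mulIf hp2); rewrite ep1.
split=> //.
rewrite E dvM -ex in dp1.
apply: (mulIf hp2). apply: (addIr (x1 * dv p2)). by rewrite -dp1.
Qed.

Lemma per_gen a0 a3 k u1 u2 u3 : periodic_with a0 a3 k ->
  (forall m, (m < k.+2)%N -> (XD u1 u2 u3 a0 a3 m).1.1.1 != 0) ->
  [/\ (XD u1 u2 u3 a0 a3 k).1.1.1 = ev u1 /\ (XD u1 u2 u3 a0 a3 k).2.1.1 = dv u1,
      (XD u1 u2 u3 a0 a3 k.+1).1.1.1 = ev u2 /\ (XD u1 u2 u3 a0 a3 k.+1).2.1.1 = dv u2 &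
      (XD u1 u2 u3 a0 a3 k.+2).1.1.1 = ev u3 /\ (XD u1 u2 u3 a0 a3 k.+2).2.1.1 = dv u3].
Proof.
move=> [wd [h0 h1 h2]] hnz.
have z0 : zseq a0 a3 0 = emb X1 by reflexivity.
have z1 : zseq a0 a3 1 = emb X2 by reflexivity.
have z2 : zseq a0 a3 2 = emb X3 by reflexivity.
split.
- have := @per_one a0 a3 k X1 u1 u2 u3 wd; rewrite phi3X1; apply; first by rewrite h0.
  by move=> m hm; apply: hnz; apply: (ltn_trans hm); apply: (ltn_trans (ltnSn k)).
- have := @per_one a0 a3 k.+1 X2 u1 u2 u3 wd; rewrite phi3X2; apply; first by rewrite h1.
  by move=> m hm; apply: hnz; apply: (ltn_trans hm).
- have := @per_one a0 a3 k.+2 X3 u1 u2 u3 wd; rewrite phi3X3; apply; first by rewrite h2.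
  by move=> m hm; apply: hnz.
Qed.

Definition Lstep (al be : C) (s : C * C * C) : C * C * C :=
  let: (e1, e2, e3) := s in (e2, e3, al * e3 - be * e1).
Fixpoint Lseq al be n : C * C * C :=
  match n with 0 => (0, 0, 1) | n'.+1 => Lstep al be (Lseq al be n') end.

Lemma XD_fixed a0 a3 x : x != 0 -> x * x = (a3 + 1) * x + a0 -> forall n,
  XD x%:P x%:P (x%:P + 'X) a0 a3 n = ((x, x, x), Lseq x^-1 ((x + a0) / x ^+ 2) n).
Proof.
move=> hx hfix; elim=> [|n IH].
  cbn [XD Lseq]. rewrite !(evD, evC, dvD, dvC) /ev /dv hornerX derivX hornerC.
  by rewrite addr0 add0r.
cbn [XD Lseq]; rewrite IH; cbn [xdstep Lstep].
case: (Lseq _ _ n) => [[e1 e2] e3].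
have -> : a3 + (x + a0) / x = x.
  apply: (mulIf hx). rewrite mulrDl divfK //. rewrite hfix. ring.
congr (_, _, _, (_, _, _)). field. exact: hx.
Qed.

Lemma fixed_per a0 a3 k x : x != 0 -> x * x = (a3 + 1) * x + a0 ->
  periodic_with a0 a3 k ->
  (Lseq x^-1 ((x + a0) / x ^+ 2) k).1.1 = 0 /\ (Lseq x^-1 ((x + a0) / x ^+ 2) k.+1).1.1 = 0.
Proof.
move=> hx hfix hp.
have H := per_gen (u1 := x%:P) (u2 := x%:P) (u3 := x%:P + 'X) hp.
rewrite !XD_fixed // in H; cbn [fst snd] in H.
have [[_ h1] [_ h2] _] := H (fun m _ => ltac:(rewrite XD_fixed //)).
by rewrite h1 h2 dvC.
Qed.

Lemma L8 al be : (Lseq al be 8).1.1 = al^+6 - 4%:R*al^+3*be + be^+2 /\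
  (Lseq al be 9).1.1 = al^+7 - 5%:R*al^+4*be + 3%:R*al*be^+2.
Proof. cbn [Lseq Lstep fst snd]; split; ring. Qed.
Lemma L12 al be : (Lseq al be 12).1.1 = al^+10 - 8%:R*al^+7*be + 15%:R*al^+4*be^+2 - 4%:R*al*be^+3 /\
  (Lseq al be 13).1.1 = al^+11 - 9%:R*al^+8*be + 21%:R*al^+5*be^+2 - 10%:R*al^+2*be^+3.
Proof. cbn [Lseq Lstep fst snd]; split; ring. Qed.

Lemma natC_neq0 n : (n.+1)%:R != 0 :> C.
Proof. have h : (n.+1%:R : Rdefinitions.R[i]) != 0 by rewrite pnatr_eq0. exact: h. Qed.

Lemma alg8 (a b : C) : a != 0 -> a^+6 - 4%:R*a^+3*b + b^+2 = 0 ->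
  a^+7 - 5%:R*a^+4*b + 3%:R*a*b^+2 = 0 -> False.
Proof.
move=> ha e0 e1.
have h : a^+4 * (2%:R*a^+3 - 7%:R*b) = 0.
  transitivity (3%:R * a * (a^+6 - 4%:R*a^+3*b + b^+2) - (a^+7 - 5%:R*a^+4*b + 3%:R*a*b^+2)).
    ring.
  by rewrite e0 e1; ring.
move/eqP: h; rewrite mulf_eq0 expf_eq0 (negPf ha) andbF /= subr_eq0 => /eqP h7.
have : 3%:R * a^+6 = 0.
  transitivity (- (2%:R * a^+3) ^+ 2 + 28%:R * a^+3 * (2%:R * a^+3) - 49%:R * a^+6).
    ring.
  rewrite h7. transitivity (- 49%:R * (a^+6 - 4%:R*a^+3*b + b^+2)).
    ring.
  by rewrite e0 mulr0.
move/eqP; rewrite mulf_eq0 expf_eq0 (negPf ha) andbF orbF.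
by rewrite (negPf (natC_neq0 2)).
Qed.

Lemma mul_cancel (a c : C) : a != 0 -> a * c = 0 -> c = 0.
Proof. by move=> ha /eqP; rewrite mulf_eq0 (negPf ha) /= => /eqP. Qed.

Lemma alg12 (a b : C) : a != 0 ->
  a^+10 - 8%:R*a^+7*b + 15%:R*a^+4*b^+2 - 4%:R*a*b^+3 = 0 ->
  a^+11 - 9%:R*a^+8*b + 21%:R*a^+5*b^+2 - 10%:R*a^+2*b^+3 = 0 -> False.
Proof.
move=> ha e0 e1.
have ha3 : a^+3 != 0 by rewrite expf_neq0.
have f0 : a^+9 - 8%:R*a^+6*b + 15%:R*a^+3*b^+2 - 4%:R*b^+3 = 0.
  apply: (mul_cancel ha); rewrite -e0; ring.
have f1 : a^+9 - 9%:R*a^+6*b + 21%:R*a^+3*b^+2 - 10%:R*b^+3 = 0.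
  apply: (mul_cancel (expf_neq0 2 ha)); rewrite -e1; ring.
have q : 3%:R*a^+6 - 22%:R*a^+3*b + 33%:R*b^+2 = 0.
  apply: (mul_cancel (mulf_neq0 (natC_neq0 1) ha3)).
  transitivity (10%:R * (a^+9 - 8%:R*a^+6*b + 15%:R*a^+3*b^+2 - 4%:R*b^+3)
     - 4%:R * (a^+9 - 9%:R*a^+6*b + 21%:R*a^+3*b^+2 - 10%:R*b^+3)); first ring.
  by rewrite f0 f1; ring.
have s : 33%:R*a^+6 - 252%:R*a^+3*b + 407%:R*b^+2 = 0.
  apply: (mul_cancel ha3).
  transitivity (33%:R * (a^+9 - 8%:R*a^+6*b + 15%:R*a^+3*b^+2 - 4%:R*b^+3)
     + 4%:R * b * (3%:R*a^+6 - 22%:R*a^+3*b + 33%:R*b^+2)); first ring.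
  by rewrite f0 q; ring.
have t : 6%:R * a^+3 = 29%:R * b.
  apply/eqP; rewrite -subr_eq0; apply/eqP.
  apply: (mul_cancel (mulf_neq0 (natC_neq0 1) ha3)).
  transitivity (37%:R * (3%:R*a^+6 - 22%:R*a^+3*b + 33%:R*b^+2)
     - 3%:R * (33%:R*a^+6 - 252%:R*a^+3*b + 407%:R*b^+2)); first ring.
  by rewrite q s; ring.
have : 117%:R * a^+6 = 0.
  transitivity (- (3%:R * (29%:R * 29%:R) * a^+6 - 22%:R * 29%:R * a^+3 * (6%:R * a^+3)
                  + 33%:R * (6%:R * a^+3)^+2)); first ring.
  rewrite t. transitivity (- (29%:R * 29%:R) * (3%:R*a^+6 - 22%:R*a^+3*b + 33%:R*b^+2)); first ring.
  by rewrite q mulr0.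
move/eqP; rewrite mulf_eq0 expf_eq0 (negPf ha) andbF orbF.
by rewrite (negPf (natC_neq0 116)).
Qed.

Definition vstep (a0 a3 : C) (s : C * C * C) : C * C * C :=
  let: (x1, x2, x3) := s in (x2, x3, a3 + (x3 + a0) / x1).
Lemma XD_fst_S u1 u2 u3 a0 a3 n :
  (XD u1 u2 u3 a0 a3 n.+1).1 = vstep a0 a3 (XD u1 u2 u3 a0 a3 n).1.
Proof. by rewrite /=; case: (XD _ _ _ _ _ n) => [[[? ?] ?] [[? ?] ?]]. Qed.

Lemma negn p : (- (p.+1)%:R : C) != 0. Proof. by rewrite oppr_eq0 natC_neq0. Qed.
Lemma posn p : ((p.+1)%:R : C) != 0. Proof. exact: natC_neq0. Qed.
Lemma posq p d : ((p.+1)%:R / (d.+1)%:R : C) != 0.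
Proof. by rewrite mulf_neq0 ?invr_eq0 ?natC_neq0. Qed.
Lemma negq p d : (- ((p.+1)%:R / (d.+1)%:R) : C) != 0.
Proof. by rewrite oppr_eq0 posq. Qed.

Lemma special k : periodic_with 0 (-1) k -> (k = 8 \/ k = 12) -> False.
Proof.
move=> hp hk.
pose u1 : {poly C} := (- 3%:R : C)%:P.
pose u2 : {poly C} := (- 2%:R : C)%:P.
pose u3 : {poly C} := (- 1%:R : C)%:P.
pose V n := (XD u1 u2 u3 0 (-1) n).1.
have v0 : V 0 = ((- 3%:R : C), (- 2%:R : C), (- 1%:R : C)) by rewrite /V /u1 /u2 /u3 /=; rewrite !evC.
have v1 : V 1 = ((- 2%:R : C), (- 1%:R : C), (- (2%:R / 3%:R) : C)).
  rewrite /V XD_fst_S -/(V 0) v0 /vstep; congr (_, _, _); by field.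
have v2 : V 2 = ((- 1%:R : C), (- (2%:R / 3%:R) : C), (- (2%:R / 3%:R) : C)).
  rewrite /V XD_fst_S -/(V 1) v1 /vstep; congr (_, _, _); by field.
have v3 : V 3 = ((- (2%:R / 3%:R) : C), (- (2%:R / 3%:R) : C), (- (1%:R / 3%:R) : C)).
  rewrite /V XD_fst_S -/(V 2) v2 /vstep; congr (_, _, _); by field.
have v4 : V 4 = ((- (2%:R / 3%:R) : C), (- (1%:R / 3%:R) : C), (- (1%:R / 2%:R) : C)).
  rewrite /V XD_fst_S -/(V 3) v3 /vstep; congr (_, _, _); by field.
have v5 : V 5 = ((- (1%:R / 3%:R) : C), (- (1%:R / 2%:R) : C), (- (1%:R / 4%:R) : C)).
  rewrite /V XD_fst_S -/(V 4) v4 /vstep; congr (_, _, _); by field.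
have v6 : V 6 = ((- (1%:R / 2%:R) : C), (- (1%:R / 4%:R) : C), (- (1%:R / 4%:R) : C)).
  rewrite /V XD_fst_S -/(V 5) v5 /vstep; congr (_, _, _); by field.
have v7 : V 7 = ((- (1%:R / 4%:R) : C), (- (1%:R / 4%:R) : C), (- (1%:R / 2%:R) : C)).
  rewrite /V XD_fst_S -/(V 6) v6 /vstep; congr (_, _, _); by field.
have v8 : V 8 = ((- (1%:R / 4%:R) : C), (- (1%:R / 2%:R) : C), (1%:R : C)).
  rewrite /V XD_fst_S -/(V 7) v7 /vstep; congr (_, _, _); by field.
have v9 : V 9 = ((- (1%:R / 2%:R) : C), (1%:R : C), (- 5%:R : C)).
  rewrite /V XD_fst_S -/(V 8) v8 /vstep; congr (_, _, _); by field.
have v10 : V 10 = ((1%:R : C), (- 5%:R : C), (9%:R : C)).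
  rewrite /V XD_fst_S -/(V 9) v9 /vstep; congr (_, _, _); by field.
have v11 : V 11 = ((- 5%:R : C), (9%:R : C), (8%:R : C)).
  rewrite /V XD_fst_S -/(V 10) v10 /vstep; congr (_, _, _); by field.
have v12 : V 12 = ((9%:R : C), (8%:R : C), (- (13%:R / 5%:R) : C)).
  rewrite /V XD_fst_S -/(V 11) v11 /vstep; congr (_, _, _); by field.
have v13 : V 13 = ((8%:R : C), (- (13%:R / 5%:R) : C), (- (58%:R / 45%:R) : C)).
  rewrite /V XD_fst_S -/(V 12) v12 /vstep; congr (_, _, _); by field.
have hnz : forall m, (m < 14)%N -> (V m).1.1 != 0.
  move=> m hm.
  case: m hm => [|m] hm; first by rewrite v0; apply: negn.
  case: m hm => [|m] hm; first by rewrite v1; apply: negn.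
  case: m hm => [|m] hm; first by rewrite v2; apply: negn.
  case: m hm => [|m] hm; first by rewrite v3; apply: negq.
  case: m hm => [|m] hm; first by rewrite v4; apply: negq.
  case: m hm => [|m] hm; first by rewrite v5; apply: negq.
  case: m hm => [|m] hm; first by rewrite v6; apply: negq.
  case: m hm => [|m] hm; first by rewrite v7; apply: negq.
  case: m hm => [|m] hm; first by rewrite v8; apply: negq.
  case: m hm => [|m] hm; first by rewrite v9; apply: negq.
  case: m hm => [|m] hm; first by rewrite v10; apply: posn.
  case: m hm => [|m] hm; first by rewrite v11; apply: negn.
  case: m hm => [|m] hm; first by rewrite v12; apply: posn.
  case: m hm => [|m] hm; first by rewrite v13; apply: posn.
  by [].

have H := per_gen (u1 := u1) (u2 := u2) (u3 := u3) hp.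
have hnz' : forall m, (m < k.+2)%N -> (XD u1 u2 u3 0 (-1) m).1.1.1 != 0.
  move=> m hm; apply: (hnz m); case: hk hm => -> hm; exact: (leq_trans hm).
have [[h _] _ _] := H hnz'.
move: h; rewrite -/(V k) /u1 evC.
case: hk => -> ; [rewrite v8 | rewrite v12]; cbn [fst] => h.
  have : (11%:R : C) = 0.
    transitivity (4%:R * (- (1%:R / 4%:R)) + 4%:R * 3%:R : C); first by field.
    by rewrite h; ring.
  by apply/eqP; rewrite natC_neq0.
have : (12%:R : C) = 0.
  transitivity (9%:R + 3%:R : C); first by ring.
  by rewrite h; ring.
by apply/eqP; rewrite natC_neq0.
Qed.

Lemma fixed_exists a0 a3 : ~ (a0 = 0 /\ a3 = -1) ->
  exists2 x : C, x != 0 & x * x = (a3 + 1) * x + a0.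
Proof.
move=> hn; have [a00|a0n] := eqVneq a0 0.
  exists (a3 + 1); last by rewrite a00 addr0.
  apply/eqP => h; apply: hn; split=> //.
  by rewrite -(addrK 1 a3) h sub0r.
pose d : C := sqrtC (((a3 + 1) ^+ 2 + 4%:R * a0 : C) : Rdefinitions.R[i]).
have hd : d ^+ 2 = (a3 + 1) ^+ 2 + 4%:R * a0 := sqrtCK _.
pose x := ((a3 + 1) + d) / 2%:R.
have eqx : x * x = (a3 + 1) * x + a0.
  apply/eqP; rewrite -subr_eq0; apply/eqP.
  transitivity ((d ^+ 2 - ((a3 + 1) ^+ 2 + 4%:R * a0)) / 4%:R); first by rewrite /x; field.
  by rewrite hd subrr mul0r.
exists x => //; apply/eqP => h0.
move: eqx; rewrite h0 mul0r mulr0 add0r => /esym h; by rewrite h eqxx in a0n.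
Qed.

Theorem mainTheorem7 (a0 a3 : C) :
  ~ periodic_with a0 a3 8 /\ ~ periodic_with a0 a3 12.
Proof.
have gen : forall k, (k = 8 \/ k = 12) -> ~ periodic_with a0 a3 k.
  move=> k hk hp.
  case: (boolP ((a0 == 0) && (a3 == -1))) => [/andP [/eqP e0 /eqP e3] | hn].
    by rewrite e0 e3 in hp; exact: special hp hk.
  have hn' : ~ (a0 = 0 /\ a3 = -1).
    by move=> [e0 e3]; move: hn; rewrite e0 e3 !eqxx.
  have [x hx hfix] := fixed_exists hn'.
  have [l0 l1] := fixed_per hx hfix hp.
  have ha : x^-1 != 0 by rewrite invr_eq0.
  case: hk => ek; subst k.
    have [L0 L1] := L8 x^-1 ((x + a0) / x ^+ 2).
    rewrite L0 in l0; rewrite L1 in l1; exact: alg8 ha l0 l1.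
  have [L0 L1] := L12 x^-1 ((x + a0) / x ^+ 2).
  rewrite L0 in l0; rewrite L1 in l1; exact: alg12 ha l0 l1.
by split; apply: gen; [left | right].
Qed.
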